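(* Let $S$ be a right non-degenerate semigroup of skew type with generating set $X$, $|X|=n$. Let $2\le i\le n+1$, let $Y\subseteq X$ with $|Y|=i-1$, let $Z\subseteq Y$ and $b\in D_Z$, and let $k$ be the length of $b$ in the generators $X$. Then $(S_{i-1})^k\cap D_Y\subseteq bS$. Furthermore, $(S_{i-1})^{k+1}\cap D_Y\subseteq bS_{i-1}$ and $(S_{i-1}\cap S_{i-1}')^{k+1}\cap D_Y\subseteq b(S_{i-1}\cap S_{i-1}')$.
   Context: A semigroup of skew type is a monoid $S$ with a monoid presentation $S=\langle x_1,\ldots,x_n \mid x_ix_j=x_kx_l\rangle$ consisting of $\binom{n}{2}$ relations, each of the form $x_ix_j=x_kx_l$ with $i\neq j$, $k\neq l$, such that every word $x_px_q$ with $p\neq q$ appears (as one side) in exactly one of the relations; $X=\{x_1,\ldots,x_n\}$. For $a,b\in X$, the partner of $ab$ is the other side of the unique defining relation containing $ab$ if $a\neq b$, and $ab$ itself if $a=b$. $S$ is right non-degenerate if for every $x\in X$ the map $X\to X$ sending $y$ to the first letter of the partner of $xy$ is surjective. For $W\subseteq X$: $S_W=\bigcap_{w\in W}wS$, $S'_W=\bigcap_{w\in W}Sw$, and $D_W=\{s\in S_W\mid \text{if } s=xt \text{ with } x\in X,\ t\in S, \text{ then } x\in W\}$. For $1\le j\le n$: $S_j=\bigcup_{W\subseteq X,|W|=j}S_W$ and $S'_j=\bigcup_{W\subseteq X,|W|=j}S'_W$. For subsets $A\subseteq S$, $A^k$ denotes the set of products of $k$ elements of $A$. *)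

(* Defs.v *)
(* The skew-type monoid S is encoded as the free monoid
   seq 'I_n (words in the generators x_0..x_{n-1}) modulo the congruence
   generated by the defining relations x_a x_b = partner(x_a x_b). *)
From Stdlib Require Import Relations.
From mathcomp Require Import all_boot.
Set Implicit Arguments. Unset Strict Implicit. Unset Printing Implicit Defensive.

Section Skew.
Variable n : nat.
Notation X := 'I_n.
Notation word := (seq X).

(* partner p a b = the other side of the unique relation containing x_a x_b
   (for a <> b), and (a,a) when a = b. *)
Definition skew_type (p : X -> X -> X * X) : Prop :=
  (forall a : X, p a a = (a, a)) /\
  (forall a b : X, a != b ->
     [/\ (p a b).1 != (p a b).2, p a b != (a, b) & p (p a b).1 (p a b).2 = (a, b)]).

Definition right_nondegenerate (p : X -> X -> X * X) : Prop :=
  forall x : X, forall z : X, exists y : X, (p x y).1 = z.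

Inductive step (p : X -> X -> X * X) : word -> word -> Prop :=
| Step (u v : word) (a b : X) :
    step p (u ++ [:: a; b] ++ v) (u ++ [:: (p a b).1; (p a b).2] ++ v).

Definition eqS (p : X -> X -> X * X) : word -> word -> Prop :=
  clos_refl_sym_trans word (step p).

Definition inSW p (W : {set X}) (s : word) : Prop :=
  forall w, w \in W -> exists t, eqS p s (w :: t).
Definition inSW' p (W : {set X}) (s : word) : Prop :=
  forall w, w \in W -> exists t, eqS p s (rcons t w).
Definition inD p (W : {set X}) (s : word) : Prop :=
  inSW p W s /\ (forall (x : X) (t : word), eqS p s (x :: t) -> x \in W).
Definition inSj p (j : nat) (s : word) : Prop :=
  exists W : {set X}, #|W| = j /\ inSW p W s.
Definition inSj' p (j : nat) (s : word) : Prop :=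
  exists W : {set X}, #|W| = j /\ inSW' p W s.
Definition inPow p (A : word -> Prop) (k : nat) (s : word) : Prop :=
  exists ws : seq word, size ws = k /\ (forall w, w \in ws -> A w) /\ eqS p s (flatten ws).
Definition inLmul p (b : word) (A : word -> Prop) (s : word) : Prop :=
  exists t, A t /\ eqS p s (b ++ t).
End Skew.

(* Main.v *)
Require Import Defs.
From mathcomp Require Import all_boot.
From Stdlib Require Import Relations.
Set Implicit Arguments. Unset Strict Implicit. Unset Printing Implicit Defensive.

Lemma surj_inj (T : finType) (f : T -> T) : (forall z, exists y, f y = z) -> injective f.
Proof.
move=> sf.
have gP z : {y | f y = z}.
  case: (pickP (fun y => f y == z)) => [y /eqP e|h]; first by exists y.
  exfalso; case: (sf z) => y e; by move: (h y); rewrite e eqxx.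
pose g z := sval (gP z).
have fg : cancel g f by move=> z; rewrite /g; case: (gP z).
have [h gh hg] := inj_card_bij (can_inj fg) (leqnn _).
have fh : f =1 h by move=> x; rewrite -{1}(hg x) fg.
by move=> x y; rewrite !fh => /(can_inj hg).
Qed.

Section Aux.
Variables (n : nat) (p : 'I_n -> 'I_n -> 'I_n * 'I_n).

Lemma eqS_refl s : eqS p s s. Proof. exact: rst_refl. Qed.
Lemma eqS_sym s t : eqS p s t -> eqS p t s. Proof. exact: rst_sym. Qed.
Lemma eqS_trans s t u : eqS p s t -> eqS p t u -> eqS p s u. Proof. exact: rst_trans. Qed.

Lemma step_catl w s t : step p s t -> step p (w ++ s) (w ++ t).
Proof. case=> u v a b; have := Step p (w ++ u) v a b; by rewrite -!catA. Qed.

Lemma step_catr w s t : step p s t -> step p (s ++ w) (t ++ w).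
Proof. case=> u v a b; rewrite -!catA; exact: Step. Qed.

Lemma eqS_catl w s t : eqS p s t -> eqS p (w ++ s) (w ++ t).
Proof.
elim=> [x y /(step_catl w) h | x | x y _ ih | x y z _ ih1 _ ih2].
- exact: rst_step. - exact: rst_refl. - exact: rst_sym. - exact: rst_trans ih1 ih2.
Qed.

Lemma eqS_catr w s t : eqS p s t -> eqS p (s ++ w) (t ++ w).
Proof.
elim=> [x y /(step_catr w) h | x | x y _ ih | x y z _ ih1 _ ih2].
- exact: rst_step. - exact: rst_refl. - exact: rst_sym. - exact: rst_trans ih1 ih2.
Qed.

Lemma eqS_swap y a t : eqS p (y :: a :: t) ((p y a).1 :: (p y a).2 :: t).
Proof. apply: rst_step; exact: (Step p [::] t y a). Qed.

Hypothesis Hnd : right_nondegenerate p.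

Lemma sig_inj y : injective (fun a => (p y a).1).
Proof. apply: surj_inj; exact: Hnd. Qed.

Lemma inSW_cons y W w : inSW p W w ->
  inSW p ((fun a => (p y a).1) @: W) (y :: w).
Proof.
move=> H z /imsetP [a aW ->]; case: (H a aW) => t e.
exists ((p y a).2 :: t).
apply: (eqS_trans (eqS_catl [:: y] e)); exact: eqS_swap.
Qed.

Lemma inSj_cat j v w : inSj p j w -> inSj p j (v ++ w).
Proof.
elim: v => [//|y v ih] /ih [W [cW HW]].
exists ((fun a => (p y a).1) @: W); split; last exact: inSW_cons.
by rewrite card_imset //; apply: sig_inj.
Qed.

Lemma core j (b : seq 'I_n) : forall (Y : {set 'I_n}) s ws,
  #|Y| = j -> (forall x t, eqS p b (x :: t) -> x \in Y) ->
  size ws = size b -> (forall w, w \in ws -> inSj p j w) ->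
  eqS p s (flatten ws) -> (forall x t, eqS p s (x :: t) -> x \in Y) ->
  exists t, eqS p s (b ++ t).
Proof.
elim: b => [|x b' ih] Y s ws cY Lb sz Hws es Ls; first by exists s; exact: eqS_refl.
case: ws sz Hws es => [//|w1 ws'] /= [sz] Hws es.
have [W [cW HW]] := Hws w1 (mem_head _ _).
have WY : W \subset Y.
  apply/subsetP => w wW; case: (HW w wW) => t e.
  apply: (Ls w (t ++ flatten ws')); apply: (eqS_trans es).
  exact: (eqS_catr (flatten ws') e).
have eWY : W = Y by apply/eqP; rewrite eqEcard WY cY cW leqnn.
have xY : x \in Y by apply: (Lb x b'); exact: eqS_refl.
rewrite eWY in HW; case: (HW x xY) => u eu.
have es2 : eqS p s (x :: (u ++ flatten ws')).
  by apply: (eqS_trans es); exact: (eqS_catr (flatten ws') eu).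
case: ws' sz Hws es es2 => [|w2 ws''] sz Hws es es2.
  move: sz; case: b' {ih Lb} => // _; exists u.
  by move: es2; rewrite /= cats0.
pose Y' := (fun a => (p x a).1) @^-1: Y.
have cY' : #|Y'| = j by rewrite card_preimset //; apply: sig_inj.
have [t et] : exists t, eqS p (u ++ flatten (w2 :: ws'')) (b' ++ t).
  apply: (ih Y' _ ((u ++ w2) :: ws'')) => //.
  - move=> y t e; rewrite inE; apply: (Lb _ ((p x y).2 :: t)).
    apply: (eqS_trans (eqS_catl [:: x] e)); exact: eqS_swap.
  - move=> w; rewrite inE => /orP [/eqP -> |wi]; last by apply: Hws; rewrite !in_cons wi !orbT.
    apply: inSj_cat; apply: Hws; rewrite !inE eqxx orbT //.
  - by rewrite /= catA; exact: eqS_refl.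
  - move=> y t e; rewrite inE; apply: (Ls _ ((p x y).2 :: t)).
    apply: (eqS_trans es2); apply: (eqS_trans (eqS_catl [:: x] e)); exact: eqS_swap.
exists t; apply: (eqS_trans es2); exact: (eqS_catl [:: x] et).
Qed.

End Aux.

Theorem lemma4p3 (n : nat) (p : 'I_n -> 'I_n -> 'I_n * 'I_n)
  (Hskew : skew_type p) (Hnd : right_nondegenerate p)
  (i : nat) (Hi : 2 <= i <= n.+1)
  (Y Z : {set 'I_n}) (HY : #|Y| = i.-1) (HZY : Z \subset Y)
  (b : seq 'I_n) (Hb : inD p Z b) :
  let k := size b in
  (forall s, inPow p (inSj p i.-1) k s -> inD p Y s ->
     inLmul p b (fun _ => True) s) /\
  (forall s, inPow p (inSj p i.-1) k.+1 s -> inD p Y s ->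
     inLmul p b (inSj p i.-1) s) /\
  (forall s, inPow p (fun u => inSj p i.-1 u /\ inSj' p i.-1 u) k.+1 s -> inD p Y s ->
     inLmul p b (fun u => inSj p i.-1 u /\ inSj' p i.-1 u) s).
Proof.
move=> k.
have Lb : forall x t, eqS p b (x :: t) -> x \in Y.
  by move=> x t e; apply: (subsetP HZY); apply: Hb.2 e.
have pre : forall (A : seq 'I_n -> Prop) s ws wl, size ws = k ->
    (forall w, w \in ws -> inSj p i.-1 w) -> eqS p s (flatten (rcons ws wl)) ->
    inD p Y s -> exists t, eqS p s (b ++ (t ++ wl)).
  move=> A s ws wl sz Hws es [_ Ls].
  have [t et] : exists t, eqS p (flatten ws) (b ++ t).
    apply: (core Hnd HY Lb sz Hws (eqS_refl _ _)).
    move=> x t e; apply: (Ls x (t ++ wl)); apply: (eqS_trans es).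
    rewrite -cats1 flatten_cat /= cats0; exact: (eqS_catr wl e).
  exists t; apply: (eqS_trans es); rewrite -cats1 flatten_cat /= cats0 catA.
  exact: (eqS_catr wl et).
split; last split.
- move=> s [ws [sz [Hws es]]] [_ Ls].
  have [t et] := core Hnd HY Lb sz Hws es Ls.
  by exists t.
- move=> s [ws [sz [Hws es]]] HD.
  case/lastP: ws sz Hws es => [//|ws wl]; rewrite size_rcons => -[sz] Hws es.
  have [t et] := pre (fun _ => True) s ws wl sz
    (fun w wi => Hws w ltac:(by rewrite mem_rcons in_cons wi orbT)) es HD.
  exists (t ++ wl); split => //; apply: inSj_cat => //.
  by apply: Hws; rewrite mem_rcons mem_head.
- move=> s [ws [sz [Hws es]]] HD.
  case/lastP: ws sz Hws es => [//|ws wl]; rewrite size_rcons => -[sz] Hws es.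
  have [t et] := pre (fun _ => True) s ws wl sz
    (fun w wi => (Hws w ltac:(by rewrite mem_rcons in_cons wi orbT)).1) es HD.
  exists (t ++ wl); split => //.
  have [H1 [W [cW HW]]] := Hws wl ltac:(by rewrite mem_rcons mem_head).
  split; first exact: inSj_cat.
  exists W; split => // w wW; case: (HW w wW) => t' e.
  exists (t ++ t'); rewrite rcons_cat; exact: eqS_catl.
Qed.
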